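(* Consider a point-to-point block-fading channel whose channel power gain $h(\nu)\ge 0$ at fading state $\nu$ is a random variable with a continuous probability density function, let $\sigma^2>0$ be the receiver noise power and $P_{\rm peak}>0$ a fixed peak power. For a target energy $\bar Q\ge 0$ and an average power budget $P_{\rm avg}\le P_{\rm peak}$, let Problem (P2)$(\bar Q,P_{\rm avg})$ be: maximize $E_\nu[\log(1+\alpha(\nu)h(\nu)p(\nu)/\sigma^2)]$ over functions $p(\nu),\alpha(\nu)$ subject to $E_\nu[(1-\alpha(\nu))h(\nu)p(\nu)]\ge \bar Q$, $E_\nu[p(\nu)]\le P_{\rm avg}$, $0\le p(\nu)\le P_{\rm peak}$ and $0\le\alpha(\nu)\le 1$ for all $\nu$. Let $\{p^a(\nu),\alpha^a(\nu)\}$ and $\{p^b(\nu),\alpha^b(\nu)\}$ be optimal solutions of (P2)$(\bar Q^a,P^a_{\rm avg})$ and (P2)$(\bar Q^b,P^b_{\rm avg})$, respectively. Then for any $0\le\theta\le1$ there exists a feasible pair $\{p^c(\nu),\alpha^c(\nu)\}$ (i.e. $0\le p^c(\nu)\le P_{\rm peak}$, $0\le \alpha^c(\nu)\le 1$ for all $\nu$) such that $E_\nu[r^c(\nu)]\ge\theta E_\nu[r^a(\nu)]+(1-\theta)E_\nu[r^b(\nu)]$, $E_\nu[Q^c(\nu)]\ge\theta\bar Q^a+(1-\theta)\bar Q^b$, and $E_\nu[p^c(\nu)]\le\theta P^a_{\rm avg}+(1-\theta)P^b_{\rm avg}$, where $r^\chi(\nu)=\log\big(1+\frac{h(\nu)\alpha^\chi(\nu)p^\chi(\nu)}{\sigma^2}\big)$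 for $\chi\in\{a,b,c\}$ and $Q^c(\nu)=(1-\alpha^c(\nu))h(\nu)p^c(\nu)$.
   Context: $p(\nu)$ is the transmit power and $\alpha(\nu)\in[0,1]$ the fraction of received signal power split to the information decoder at fading state $\nu$ (the rest goes to the energy harvester); $E_\nu$ denotes expectation over the fading state. *)

(* Defs.v *)
From HB Require Import structures.
From mathcomp Require Import all_boot all_order all_algebra.
From mathcomp Require Import all_classical all_reals all_analysis.
Set Implicit Arguments. Unset Strict Implicit. Unset Printing Implicit Defensive.
Import Order.TTheory GRing.Theory Num.Theory.
Import numFieldNormedType.Exports.
Local Open Scope classical_set_scope.
Local Open Scope ring_scope.

(* The fading state nu ranges over a probability space (T, P); E_nu[f] is
   \int[P]_nu f nu (extended-real valued integral). *)

Definition has_continuous_pdf (R : realType) (d : measure_display)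
  (T : measurableType d) (P : probability T R) (h : T -> R) : Prop :=
  exists f : R -> R, continuous (f : R -> R) /\ (forall x, 0 <= f x) /\
    forall A : set R, measurable A ->
      P (h @^-1` A) = (\int[@lebesgue_measure R]_(x in A) (f x)%:E)%E.

Definition rate (R : realType) (T : Type) (h : T -> R) (sigma2 : R)
  (p alpha : T -> R) (nu : T) : R :=
  ln (1 + h nu * alpha nu * p nu / sigma2).

Definition energy (R : realType) (T : Type) (h : T -> R)
  (p alpha : T -> R) (nu : T) : R :=
  (1 - alpha nu) * h nu * p nu.

(* pointwise feasibility: 0 <= p <= Ppeak, 0 <= alpha <= 1, plus measurability
   (so that the expectations are meaningful) *)
Definition pointwise_feasible (R : realType) (d : measure_display)
  (T : measurableType d) (Ppeak : R) (p alpha : T -> R) : Prop :=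
  measurable_fun setT p /\ measurable_fun setT alpha /\
  (forall nu, 0 <= p nu <= Ppeak) /\ (forall nu, 0 <= alpha nu <= 1).

Definition P2_feasible (R : realType) (d : measure_display)
  (T : measurableType d) (P : probability T R) (h : T -> R)
  (Ppeak Qbar Pavg : R) (p alpha : T -> R) : Prop :=
  pointwise_feasible Ppeak p alpha /\
  (\int[P]_nu (energy h p alpha nu)%:E >= Qbar%:E)%E /\
  (\int[P]_nu (p nu)%:E <= Pavg%:E)%E.

Definition P2_optimal (R : realType) (d : measure_display)
  (T : measurableType d) (P : probability T R) (h : T -> R) (sigma2 : R)
  (Ppeak Qbar Pavg : R) (p alpha : T -> R) : Prop :=
  P2_feasible P h Ppeak Qbar Pavg p alpha /\
  forall p' alpha', P2_feasible P h Ppeak Qbar Pavg p' alpha' ->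
    (\int[P]_nu (rate h sigma2 p' alpha' nu)%:E
       <= \int[P]_nu (rate h sigma2 p alpha nu)%:E)%E.

(* Main.v *)
Require Import Defs.
From HB Require Import structures.
From mathcomp Require Import all_boot all_order all_algebra all_classical all_reals all_analysis.
From mathcomp Require Import measurable_realfun lra ring.
Import Order.TTheory GRing.Theory Num.Theory.
Local Open Scope classical_set_scope.
Local Open Scope ring_scope.

Lemma ln_conc (R : realType) (t a b : R) : 0 <= t -> t <= 1 -> 0 < a -> 0 < b ->
  t * ln a + (1 - t) * ln b <= ln (t * a + (1 - t) * b).
Proof.
move=> t0 t1 a0 b0.
have := @concave_ln R (Itv01 t0 t1) a b a0 b0.
by rewrite !convRE /=.
Qed.

Lemma int_comb (R : realType) (d : measure_display) (T : measurableType d)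
  (P : probability T R) (f g : T -> R) (t : R) :
  measurable_fun setT f -> measurable_fun setT g ->
  (forall x, 0 <= f x) -> (forall x, 0 <= g x) -> 0 <= t -> t <= 1 ->
  (\int[P]_x ((t * f x + (1 - t) * g x)%:E) =
   t%:E * \int[P]_x (f x)%:E + (1 - t)%:E * \int[P]_x (g x)%:E)%E.
Proof.
move=> mf mg f0 g0 t0 t1.
have t0' : 0 <= 1 - t by rewrite subr_ge0.
under eq_integral do rewrite EFinD.
rewrite ge0_integralD //; last 4 first.
- by move=> x _; rewrite lee_fin mulr_ge0.
- by apply/measurable_EFinP; apply: measurable_funM => //; exact: measurable_cst.
- by move=> x _; rewrite lee_fin mulr_ge0.
- by apply/measurable_EFinP; apply: measurable_funM => //; exact: measurable_cst.
under eq_integral do rewrite EFinM.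
under [X in _ + X]eq_integral do rewrite EFinM.
have mfE : measurable_fun setT (fun x => (f x)%:E) by exact/measurable_EFinP.
have mgE : measurable_fun setT (fun x => (g x)%:E) by exact/measurable_EFinP.
rewrite ge0_integralZl// ?lee_fin//; last by move=> x _; rewrite lee_fin.
rewrite ge0_integralZl// ?lee_fin//; by move=> x _; rewrite lee_fin.
Qed.

Lemma mrate (R : realType) (d : measure_display) (T : measurableType d)
  (h p a : T -> R) (s : R) : measurable_fun setT h -> measurable_fun setT p ->
  measurable_fun setT a ->
  measurable_fun setT (fun nu => ln (1 + h nu * a nu * p nu / s)).
Proof.
move=> mh mp ma.
apply: (measurableT_comp (@measurable_ln R)).
apply: measurable_funD; first exact: measurable_cst.
apply: measurable_funM; last exact: measurable_cst.
by apply: measurable_funM => //; apply: measurable_funM.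
Qed.

Lemma rate_ge0 (R : realType) (hn an pn s : R) : 0 <= hn -> 0 <= an -> 0 <= pn ->
  0 < s -> 0 <= ln (1 + hn * an * pn / s).
Proof.
move=> *; apply: ln_ge0; rewrite lerDl; apply: divr_ge0; last exact: ltW.
by rewrite !mulr_ge0.
Qed.

Theorem lemma3p1 (R : realType) (d : measure_display) (T : measurableType d)
  (P : probability T R) (h : T -> R) (sigma2 Ppeak : R)
  (Qa Pa Qb Pb : R) (pa alphaa pb alphab : T -> R) (theta : R) :
  measurable_fun setT h -> (forall nu, 0 <= h nu) ->
  has_continuous_pdf P h ->
  0 < sigma2 -> 0 < Ppeak ->
  0 <= Qa -> Pa <= Ppeak -> 0 <= Qb -> Pb <= Ppeak ->
  P2_optimal P h sigma2 Ppeak Qa Pa pa alphaa ->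
  P2_optimal P h sigma2 Ppeak Qb Pb pb alphab ->
  0 <= theta <= 1 ->
  exists pc alphac : T -> R,
    pointwise_feasible Ppeak pc alphac /\
    (\int[P]_nu (rate h sigma2 pc alphac nu)%:E >=
       theta%:E * \int[P]_nu (rate h sigma2 pa alphaa nu)%:E
       + (1 - theta)%:E * \int[P]_nu (rate h sigma2 pb alphab nu)%:E)%E /\
    (\int[P]_nu (energy h pc alphac nu)%:E >= (theta * Qa + (1 - theta) * Qb)%:E)%E /\
    (\int[P]_nu (pc nu)%:E <= (theta * Pa + (1 - theta) * Pb)%:E)%E.
Proof.
move=> mh h0 _ s0 pk0 Qa0 Pak Qb0 Pbk
  [[[mpa [maa [pa01 aa01]]] [Ea Pav]] _] [[[mpb [mab [pb01 ab01]]] [Eb Pbv]] _]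
  /andP[t0 t1].
have t0' : 0 <= 1 - theta by rewrite subr_ge0.
pose xc nu := theta * (alphaa nu * pa nu) + (1 - theta) * (alphab nu * pb nu).
pose pc nu := theta * pa nu + (1 - theta) * pb nu.
pose alphac nu := xc nu * expR (- ln (pc nu)).
have xa01 nu : 0 <= alphaa nu * pa nu <= pa nu.
  have /andP[a0 a1] := aa01 nu; have /andP[p0 p1] := pa01 nu.
  by rewrite mulr_ge0 //= ler_piMl.
have xb01 nu : 0 <= alphab nu * pb nu <= pb nu.
  have /andP[a0 a1] := ab01 nu; have /andP[p0 p1] := pb01 nu.
  by rewrite mulr_ge0 //= ler_piMl.
have xc0 nu : 0 <= xc nu.
  have /andP[? ?] := xa01 nu; have /andP[? ?] := xb01 nu.
  by rewrite addr_ge0 // mulr_ge0.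
have xcp nu : xc nu <= pc nu.
  have /andP[? ?] := xa01 nu; have /andP[? ?] := xb01 nu.
  by rewrite lerD // ler_wpM2l.
have pc0 nu : 0 <= pc nu by apply: le_trans (xcp nu).
have key nu : alphac nu * pc nu = xc nu.
  rewrite /alphac; have := pc0 nu; rewrite le_eqVlt => /predU1P[e|p0].
    have : xc nu = 0 by apply/eqP; rewrite eq_le xc0 andbT; move: (xcp nu); rewrite -e.
    by move=> ->; rewrite !mul0r.
  by rewrite expRN lnK ?posrE // mulfVK // gt_eqF.
have ac01 nu : 0 <= alphac nu <= 1.
  rewrite /alphac mulr_ge0 ?expR_ge0 //=.
  have := pc0 nu; rewrite le_eqVlt => /predU1P[e|p0].
    have : xc nu = 0 by apply/eqP; rewrite eq_le xc0 andbT; move: (xcp nu); rewrite -e.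
    by move=> ->; rewrite mul0r.
  by rewrite expRN lnK ?posrE // ler_pdivrMr // mul1r.
have mxa : measurable_fun setT (fun nu => alphaa nu * pa nu) by apply: measurable_funM.
have mxb : measurable_fun setT (fun nu => alphab nu * pb nu) by apply: measurable_funM.
have mcomb (f g : T -> R) : measurable_fun setT f -> measurable_fun setT g ->
    measurable_fun setT (fun nu => theta * f nu + (1 - theta) * g nu).
  move=> mf mg; apply: measurable_funD; apply: measurable_funM => //;
  exact: measurable_cst.
have mpc : measurable_fun setT pc by exact: mcomb.
have mxc : measurable_fun setT xc by exact: mcomb.
have mac : measurable_fun setT alphac.
  apply: measurable_funM => //.
  apply: (measurableT_comp (@measurable_expR R)).
  apply: measurable_funN.
  exact: (measurableT_comp (@measurable_ln R)).
exists pc, alphac; split.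
  split => //; split => //; split => // nu; rewrite pc0 /=.
  have /andP[_ ?] := pa01 nu; have /andP[_ ?] := pb01 nu.
  rewrite /pc; nra.
have ra0 nu : 0 <= rate h sigma2 pa alphaa nu.
  by have /andP[? _] := aa01 nu; have /andP[? _] := pa01 nu; exact: rate_ge0.
have rb0 nu : 0 <= rate h sigma2 pb alphab nu.
  by have /andP[? _] := ab01 nu; have /andP[? _] := pb01 nu; exact: rate_ge0.
have rc0 nu : 0 <= rate h sigma2 pc alphac nu.
  by have /andP[? _] := ac01 nu; exact: rate_ge0.
have Ea0 nu : 0 <= energy h pa alphaa nu.
  have /andP[? ?] := aa01 nu; have /andP[? _] := pa01 nu.
  by rewrite /energy !mulr_ge0 // subr_ge0.
have Eb0 nu : 0 <= energy h pb alphab nu.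
  have /andP[? ?] := ab01 nu; have /andP[? _] := pb01 nu.
  by rewrite /energy !mulr_ge0 // subr_ge0.
have mEa : measurable_fun setT (energy h pa alphaa).
  apply: measurable_funM => //; apply: measurable_funM => //.
  by apply: measurable_funB => //; exact: measurable_cst.
have mEb : measurable_fun setT (energy h pb alphab).
  apply: measurable_funM => //; apply: measurable_funM => //.
  by apply: measurable_funB => //; exact: measurable_cst.
split.
  rewrite -int_comb //; last 2 first.
  - exact: mrate.
  - exact: mrate.
  apply: ge0_le_integral => //.
  - by move=> nu _; rewrite lee_fin addr_ge0 // mulr_ge0.
  - apply/measurable_EFinP; apply: mcomb; exact: mrate.
  - apply/measurable_EFinP; exact: mrate.
  move=> nu _; rewrite lee_fin /rate -[h nu * alphac nu * pc nu]mulrA key.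
  have -> : 1 + h nu * xc nu / sigma2 =
     theta * (1 + h nu * (alphaa nu * pa nu) / sigma2) +
     (1 - theta) * (1 + h nu * (alphab nu * pb nu) / sigma2).
    by rewrite /xc; ring.
  rewrite !mulrA; apply: ln_conc => //.
  - have /andP[? _] := aa01 nu; have /andP[? _] := pa01 nu.
    apply: (lt_le_trans ltr01); rewrite lerDl divr_ge0 ?(ltW s0) //.
    by rewrite !mulr_ge0.
  - have /andP[? _] := ab01 nu; have /andP[? _] := pb01 nu.
    apply: (lt_le_trans ltr01); rewrite lerDl divr_ge0 ?(ltW s0) //.
    by rewrite !mulr_ge0.
split.
  have Ec nu : energy h pc alphac nu =
      theta * energy h pa alphaa nu + (1 - theta) * energy h pb alphab nu.
    rewrite /energy.
    transitivity (h nu * pc nu - h nu * (alphac nu * pc nu)); first by ring.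
    by rewrite key /pc /xc; ring.
  under eq_integral do rewrite Ec.
  rewrite int_comb // EFinD !EFinM.
  by apply: leeD; apply: lee_wpmul2l; rewrite ?lee_fin.
rewrite /pc int_comb //; last 2 first.
- by move=> nu; have /andP[] := pa01 nu.
- by move=> nu; have /andP[] := pb01 nu.
rewrite (EFinD (theta * Pa)) (EFinM theta Pa) (EFinM (1 - theta) Pb).
by apply: leeD; apply: lee_wpmul2l; rewrite ?lee_fin.
Qed.
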